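(* Let $P$ be the feasible set of the rational mixed-integer program $\min\{c^Tx : Ax\le b,\ \ell\le x\le u,\ x_j\in\mathbb{Z} \text{ for all } j\in I\}$, where $A\in\mathbb{Q}^{m\times n}$, $c\in\mathbb{Q}^n$, $b\in\mathbb{Q}^m$, $\ell,u\in(\mathbb{Q}\cup\{\pm\infty\})^n$, $I\subseteq\{1,\dots,n\}$. Let $a^Tx\le \beta$ and $g^Tx\le d$ be two valid, $\mathbb{F}$-representable inequalities for $P$, and let $\lambda\in\mathbb{F}$ with $\lambda>0$. Set $\alpha_i:=a_i+\lambda g_i$ for $i=1,\dots,n$, and let $U,L\subseteq\{1,\dots,n\}$ be disjoint index sets such that $u_i<\infty$ for all $i\in U$, $\ell_i>-\infty$ for all $i\in L$, and $\alpha_i=0$ for all $i\notin U\cup L$. Then the inequality $$\sum_{i\in U}\overline{\alpha_i}\,x_i+\sum_{i\in L}\underline{\alpha_i}\,x_i\;\le\;\overline{\beta+\lambda d+\sum_{i\in U,\,u_i>0}(\overline{\alpha_i}-\underline{\alpha_i})\,u_i+\sum_{i\in L,\,\ell_i<0}(\underline{\alpha_i}-\overline{\alpha_i})\,\ell_i}$$ is an $\mathbb{F}$-representable inequality valid for $P$ (a valid approximation of the aggregated inequality $(a+\lambda g)^Tx\le \beta+\lambda d$).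
   Context: An inequality is valid for $P$ if every point of $P$ satisfies it. $\mathbb{F}\subseteq\mathbb{Q}$ denotes a fixed set of floating-point numbers (e.g. IEEE double-precision numbers). For $x\in\mathbb{Q}$, $\overline{x}:=\min\{y\in\mathbb{F}: y>x\}$ and $\underline{x}:=\max\{y\in\mathbb{F}: y<x\}$ (assumed to exist for all numbers occurring). An inequality $a^Tx\le\beta$ is $\mathbb{F}$-representable if $a\in\mathbb{F}^n$ and $\beta\in\mathbb{F}$. *)

(* Defs.v *)
From HB Require Import structures.
From mathcomp Require Import all_boot all_order all_algebra.
From mathcomp Require Import constructive_ereal.
From Stdlib Require Import ClassicalEpsilon.
Set Implicit Arguments. Unset Strict Implicit. Unset Printing Implicit Defensive.
Import Order.TTheory GRing.Theory Num.Theory.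
Local Open Scope ring_scope.

(* The set F of floating-point numbers is modelled as a predicate on rat. *)

Definition is_rup (F : rat -> Prop) (x y : rat) : Prop :=
  F y /\ x < y /\ (forall z, F z -> x < z -> y <= z).
Definition is_rdn (F : rat -> Prop) (x y : rat) : Prop :=
  F y /\ y < x /\ (forall z, F z -> z < x -> z <= y).

Definition ex_rup F x := exists y, is_rup F x y.
Definition ex_rdn F x := exists y, is_rdn F x y.

(* overline x (meaningful when ex_rup F x holds) *)
Definition rup (F : rat -> Prop) (x : rat) : rat :=
  epsilon (inhabits x) (is_rup F x).
(* underline x (meaningful when ex_rdn F x holds) *)
Definition rdn (F : rat -> Prop) (x : rat) : rat :=
  epsilon (inhabits x) (is_rdn F x).

Definition mip_feasible (m n : nat) (A : 'I_m -> 'I_n -> rat) (b : 'I_m -> rat)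
  (l u : 'I_n -> \bar rat) (I : {set 'I_n}) (x : 'I_n -> rat) : Prop :=
  (forall j : 'I_m, \sum_(i < n) A j i * x i <= b j) /\
  (forall i : 'I_n, (l i <= (x i)%:E)%E /\ ((x i)%:E <= u i)%E) /\
  (forall j : 'I_n, j \in I -> exists z : int, x j = z%:~R).

Definition valid_ineq (n : nat) (P : ('I_n -> rat) -> Prop)
  (a : 'I_n -> rat) (beta : rat) : Prop :=
  forall x, P x -> \sum_(i < n) a i * x i <= beta.

Definition F_repr (F : rat -> Prop) (n : nat) (a : 'I_n -> rat) (beta : rat) : Prop :=
  (forall i, F (a i)) /\ F beta.

(* Main.v *)
Require Import Defs.
From HB Require Import structures.
From mathcomp Require Import all_boot all_order all_algebra.
From mathcomp Require Import constructive_ereal.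
From mathcomp Require Import lra.
From Stdlib Require Import ClassicalEpsilon.
Import Order.TTheory GRing.Theory Num.Theory.
Local Open Scope ring_scope.

Lemma rupP F x : ex_rup F x -> is_rup F x (rup F x).
Proof. by move=> [y Hy]; rewrite /rup; apply: epsilon_spec; exists y. Qed.
Lemma rdnP F x : ex_rdn F x -> is_rdn F x (rdn F x).
Proof. by move=> [y Hy]; rewrite /rdn; apply: epsilon_spec; exists y. Qed.

Arguments rupP {F x}.
Arguments rdnP {F x}.

Theorem corollary1 (F : rat -> Prop) (F0 : F 0)
  (m n : nat) (A : 'I_m -> 'I_n -> rat) (c : 'I_n -> rat) (b : 'I_m -> rat)
  (l u : 'I_n -> \bar rat) (I : {set 'I_n})
  (a g : 'I_n -> rat) (beta d lambda : rat)
  (Ha_valid : valid_ineq (mip_feasible A b l u I) a beta)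
  (Hg_valid : valid_ineq (mip_feasible A b l u I) g d)
  (Ha_repr : F_repr F a beta) (Hg_repr : F_repr F g d)
  (Hlam_F : F lambda) (Hlam_pos : 0 < lambda)
  (U L : {set 'I_n}) (HUL : [disjoint U & L])
  (HU : forall i, i \in U -> (u i < +oo)%E)
  (HL : forall i, i \in L -> (-oo < l i)%E)
  (Hzero : forall i, i \notin U :|: L -> a i + lambda * g i = 0)
  (* existence of all roundings that occur *)
  (HexU : forall i, i \in U -> ex_rup F (a i + lambda * g i))
  (HexU' : forall i, i \in U -> (0 < fine (u i)) -> ex_rdn F (a i + lambda * g i))
  (HexL : forall i, i \in L -> ex_rdn F (a i + lambda * g i))
  (HexL' : forall i, i \in L -> (fine (l i) < 0) -> ex_rup F (a i + lambda * g i))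
  (Hexrhs : ex_rup F (beta + lambda * d
      + \sum_(i in U | 0 < fine (u i))
          (rup F (a i + lambda * g i) - rdn F (a i + lambda * g i)) * fine (u i)
      + \sum_(i in L | fine (l i) < 0)
          (rdn F (a i + lambda * g i) - rup F (a i + lambda * g i)) * fine (l i))) :
  let alpha := fun i => a i + lambda * g i in
  let gamma := fun i => if i \in U then rup F (alpha i)
                        else if i \in L then rdn F (alpha i) else 0 in
  let rhs := rup F (beta + lambda * d
      + \sum_(i in U | 0 < fine (u i)) (rup F (alpha i) - rdn F (alpha i)) * fine (u i)
      + \sum_(i in L | fine (l i) < 0) (rdn F (alpha i) - rup F (alpha i)) * fine (l i)) in
  F_repr F gamma rhs /\ valid_ineq (mip_feasible A b l u I) gamma rhs.
Proof.
move=> alpha gamma rhs.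
have HUL' : forall i, i \in U -> i \notin L.
  by move=> i iU; rewrite (disjointFr HUL iU).
split.
  split; last by case: (rupP Hexrhs).
  move=> i; rewrite /gamma; case: ifPn => iU; first by case: (rupP (HexU i iU)).
  case: ifPn => iL; first by case: (rdnP (HexL i iL)).
  exact: F0.
move=> x Hx.
have Ha := Ha_valid x Hx; have Hg := Hg_valid x Hx.
case: Hx => _ [Hb _].
set tU := fun i => if (i \in U) && (0 < fine (u i)) then (rup F (alpha i) - rdn F (alpha i)) * fine (u i) else 0.
set tL := fun i => if (i \in L) && (fine (l i) < 0) then (rdn F (alpha i) - rup F (alpha i)) * fine (l i) else 0.
have key : forall i, gamma i * x i <= alpha i * x i + tU i + tL i.
  move=> i; rewrite /gamma /tU /tL.
  case: ifPn => iU.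
    rewrite (negbTE (HUL' i iU)) /= addr0.
    have [_ [Hr _]] := rupP (HexU i iU).
    have Hxu : x i <= fine (u i).
      case: (Hb i) => _; move: (HU i iU); case: (u i) => [r| |] /=.
      - by move=> _; rewrite lee_fin.
      - by rewrite ltxx.
      - by move=> _; rewrite leeNy_eq.
    case: ifPn => Hu.
      have [_ [Hq _]] := rdnP (HexU' i iU Hu).
      have h1 : 0 <= (rup F (alpha i) - alpha i) * (fine (u i) - x i).
        by apply: mulr_ge0; rewrite subr_ge0 //; exact: ltW.
      have h2 : 0 <= (alpha i - rdn F (alpha i)) * fine (u i).
        by apply: mulr_ge0; [rewrite subr_ge0; exact: ltW | exact: ltW].
      move: h1 h2; rewrite !mulrBl !mulrBr; lra.
    rewrite -leNgt in Hu.
    have h1 : 0 <= (rup F (alpha i) - alpha i) * (fine (u i) - x i).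
      by apply: mulr_ge0; rewrite subr_ge0 //; exact: ltW.
    have h2 : (rup F (alpha i) - alpha i) * fine (u i) <= 0.
      by apply: mulr_ge0_le0; [rewrite subr_ge0; exact: ltW | exact: Hu].
    move: h1 h2; rewrite !mulrBl !mulrBr; lra.
  rewrite /= addr0.
  case: ifPn => iL.
    have [_ [Hr _]] := rdnP (HexL i iL).
    have Hxl : fine (l i) <= x i.
      case: (Hb i) => + _; move: (HL i iL); case: (l i) => [r| |] /=.
      - by move=> _; rewrite lee_fin.
      - by move=> _; rewrite leye_eq.
      - by rewrite ltxx.
    case: ifPn => Hl.
      have [_ [Hq _]] := rupP (HexL' i iL Hl).
      have h1 : 0 <= (alpha i - rdn F (alpha i)) * (x i - fine (l i)).
        by apply: mulr_ge0; rewrite subr_ge0 //; exact: ltW.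
      have h2 : 0 <= (rup F (alpha i) - alpha i) * - fine (l i).
        by apply: mulr_ge0; [rewrite subr_ge0; exact: ltW | rewrite oppr_ge0; exact: ltW].
      move: h1 h2; rewrite !mulrBl !mulrBr !mulrN; lra.
    rewrite -leNgt in Hl.
    have h1 : 0 <= (alpha i - rdn F (alpha i)) * (x i - fine (l i)).
      by apply: mulr_ge0; rewrite subr_ge0 //; exact: ltW.
    have h2 : 0 <= (alpha i - rdn F (alpha i)) * fine (l i).
      by apply: mulr_ge0; [rewrite subr_ge0; exact: ltW | exact: Hl].
    move: h1 h2; rewrite !mulrBl !mulrBr; lra.
  have : alpha i = 0 by apply: Hzero; rewrite in_setU negb_or iU iL.
  by move=> ->; rewrite !mul0r !addr0.
have [_ [Hrhs _]] := rupP Hexrhs.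
apply/ltW; apply: le_lt_trans Hrhs.
apply: (le_trans (ler_sum _ (fun i _ => key i))).
rewrite !big_split /=.
have -> : \sum_(i < n) alpha i * x i = \sum_(i < n) a i * x i + lambda * \sum_(i < n) g i * x i.
  rewrite mulr_sumr -big_split /=; apply: eq_bigr => i _; by rewrite /alpha mulrDl mulrA.
rewrite /tU /tL -!big_mkcond /=.
rewrite /alpha lerD2r lerD2r.
by apply: lerD => //; rewrite ler_pM2l.
Qed.
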